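(* Let $X$ be a compact metric space whose metric $d$ is an ultrametric, let $0<L<1$, and let $f\colon X\to X$ be a continuous map. The following are equivalent: (1) $f$ has the $L$-Lipschitz shadowing property; (2) there is $\delta_0>0$ such that $B_\delta(f(x))\subset f(B_{L\delta}(x))$ for all $0<\delta\le\delta_0$ and all $x\in X$.
   Context: $d$ is an ultrametric: $d(x,z)\le\max\{d(x,y),d(y,z)\}$ for all $x,y,z$. $B_r(x)=\{y\in X: d(x,y)\le r\}$ is the closed $r$-ball. For $\delta>0$, a sequence $(x_i)_{i\ge0}$ is a $\delta$-pseudo orbit of $f$ if $d(f(x_i),x_{i+1})\le\delta$ for all $i\ge0$; it is $\epsilon$-shadowed by $x$ if $d(f^i(x),x_i)\le\epsilon$ for all $i\ge0$. $f$ has the $L$-Lipschitz shadowing property if there is $\delta_0>0$ such that for every $0<\delta\le\delta_0$, every $\delta$-pseudo orbit of $f$ is $L\delta$-shadowed by some point of $X$. *)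

(* Defs.v *)
From Stdlib Require Import Reals.
Open Scope R_scope.

Definition is_metric {X : Type} (d : X -> X -> R) : Prop :=
  (forall x y, 0 <= d x y) /\
  (forall x y, d x y = 0 <-> x = y) /\
  (forall x y, d x y = d y x) /\
  (forall x y z, d x z <= d x y + d y z).

Definition is_ultrametric {X : Type} (d : X -> X -> R) : Prop :=
  forall x y z, d x z <= Rmax (d x y) (d y z).

Definition metric_open {X : Type} (d : X -> X -> R) (U : X -> Prop) : Prop :=
  forall x, U x -> exists e, 0 < e /\ forall y, d x y < e -> U y.

Definition metric_compact {X : Type} (d : X -> X -> R) : Prop :=
  forall (I : Type) (U : I -> X -> Prop),
    (forall i, metric_open d (U i)) ->
    (forall x, exists i, U i x) ->
    exists l : list I, forall x, exists i, List.In i l /\ U i x.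

Definition metric_continuous {X : Type} (d : X -> X -> R) (f : X -> X) : Prop :=
  forall x eps, 0 < eps -> exists del, 0 < del /\
    forall y, d x y < del -> d (f x) (f y) < eps.

Definition cball {X : Type} (d : X -> X -> R) (x : X) (r : R) : X -> Prop :=
  fun y => d x y <= r.

Definition pseudo_orbit {X : Type} (d : X -> X -> R) (f : X -> X)
  (del : R) (xs : nat -> X) : Prop :=
  forall i, d (f (xs i)) (xs (S i)) <= del.

Definition shadowed {X : Type} (d : X -> X -> R) (f : X -> X)
  (eps : R) (xs : nat -> X) (x : X) : Prop :=
  forall i, d (Nat.iter i f x) (xs i) <= eps.

Definition lipschitz_shadowing {X : Type} (d : X -> X -> R) (f : X -> X)
  (L : R) : Prop :=
  exists del0, 0 < del0 /\
    forall del, 0 < del -> del <= del0 ->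
      forall xs, pseudo_orbit d f del xs ->
        exists x, shadowed d f (L * del) xs x.

(* Main.v *)
Require Import Defs.
From Stdlib Require Import Reals.
From Stdlib Require Import Lra Lia Classical ClassicalEpsilon List.
Open Scope R_scope.

Lemma powS_le (L : R) (n : nat) : 0 < L -> L < 1 -> L ^ S n <= L ^ n.
Proof. intros h0 h1. simpl. pose proof (pow_lt L n h0). nra. Qed.

Lemma pow_le1 (L : R) (n : nat) : 0 < L -> L < 1 -> L ^ n <= 1.
Proof. intros h0 h1. induction n. simpl; lra. pose proof (powS_le L n h0 h1). lra. Qed.

Fixpoint lmax (l : list nat) : nat :=
  match l with nil => 0%nat | a :: l' => Nat.max a (lmax l') end.

Lemma lmax_in l i : In i l -> (i <= lmax l)%nat.
Proof. induction l; simpl; intros H; [contradiction|]. destruct H; [subst; lia|].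
  specialize (IHl H); lia. Qed.

Lemma nested {X : Type} (d : X -> X -> R) (hc : metric_compact d)
  (A : nat -> X -> Prop) :
  (forall n w, A (S n) w -> A n w) ->
  (forall n, exists w, A n w) ->
  (forall n, metric_open d (fun w => ~ A n w)) ->
  exists w, forall n, A n w.
Proof.
  intros hdec hne hop.
  apply NNPP; intro Hno.
  destruct (hc nat (fun n w => ~ A n w) hop) as [l Hl].
  { intro x. apply not_all_ex_not. intro H. apply Hno. exists x. exact H. }
  destruct (hne (lmax l)) as [w Hw].
  destruct (Hl w) as [i [Hi Hnot]]. apply Hnot.
  pose proof (lmax_in l i Hi) as Hle.
  clear Hl Hi Hnot hne Hno.
  induction Hle; auto.
Qed.

Lemma iter_cont {X : Type} (d : X -> X -> R) (f : X -> X)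
  (hf : metric_continuous d f) : forall k x eps, 0 < eps -> exists del, 0 < del /\
    forall y, d x y < del -> d (Nat.iter k f x) (Nat.iter k f y) < eps.
Proof.
  induction k; intros x eps he.
  - exists eps; split; auto.
  - destruct (hf (Nat.iter k f x) eps he) as [d1 [hd1 H1]].
    destruct (IHk x d1 hd1) as [d2 [hd2 H2]].
    exists d2; split; auto. intros y hy. simpl. apply H1. apply H2; auto.
Qed.

Theorem theorem1p6 (X : Type) (d : X -> X -> R) (L : R) (f : X -> X)
  (hd : is_metric d) (hu : is_ultrametric d) (hc : metric_compact d)
  (hL0 : 0 < L) (hL1 : L < 1) (hf : metric_continuous d f) :
  lipschitz_shadowing d f L <->
  exists del0, 0 < del0 /\
    forall del, 0 < del -> del <= del0 -> forall x y,
      cball d (f x) del y -> exists z, cball d x (L * del) z /\ f z = y.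
Proof.
  destruct hd as [hpos [hzero [hsym htri]]].
  assert (hrefl : forall a, d a a = 0) by (intro a; apply hzero; reflexivity).
  unfold cball.
  split.
  - intros [del0 [hdel0 Hsh]].
    exists del0; split; auto.
    intros del hdel hle x y hxy.
    assert (Hstep : forall n x', d (f x') y <= L ^ n * del ->
      exists z, d x' z <= L ^ S n * del /\ d (f z) y <= L ^ S n * del).
    { intros n x' hx'.
      pose proof (pow_lt L n hL0). pose proof (pow_le1 L n hL0 hL1).
      destruct (Hsh (L ^ n * del)) with
        (xs := fun i => match i with 0%nat => x' | S k => Nat.iter k f y end)
        as [z Hz].
      + apply Rmult_lt_0_compat; auto.
      + nra.
      + intros [|k]; simpl. auto. rewrite hrefl. apply Rmult_le_pos; lra.
      + exists z. pose proof (Hz 0%nat) as G0. pose proof (Hz 1%nat) as G1.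
        simpl in G0, G1. split.
        * rewrite hsym. simpl. lra.
        * simpl. lra. }
    assert (Hex : forall n x', exists z, d (f x') y <= L ^ n * del ->
      d x' z <= L ^ S n * del /\ d (f z) y <= L ^ S n * del).
    { intros n x'. destruct (classic (d (f x') y <= L ^ n * del)) as [h|h].
      - destruct (Hstep n x' h) as [z Hz]. exists z; auto.
      - exists x'; intro; contradiction. }
    set (g := fun n x' => proj1_sig (constructive_indefinite_description _ (Hex n x'))).
    assert (Hg : forall n x', d (f x') y <= L ^ n * del ->
      d x' (g n x') <= L ^ S n * del /\ d (f (g n x')) y <= L ^ S n * del).
    { intros n x'. unfold g. destruct (constructive_indefinite_description _ _); auto. }
    set (z := fun n => nat_rect (fun _ => X) x (fun k zk => g k zk) n).
    assert (Hz1 : forall n, d (f (z n)) y <= L ^ n * del).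
    { induction n. simpl. lra. apply (Hg n (z n) IHn). }
    assert (Hz2 : forall n, d (z n) (z (S n)) <= L ^ S n * del).
    { intro n. apply (Hg n (z n) (Hz1 n)). }
    destruct (nested d hc (fun n w => d (z n) w <= L ^ S n * del)) as [w Hw].
    + intros n w Hw. cbv beta in Hw |- *.
      eapply Rle_trans. apply (hu _ (z (S n))). apply Rmax_lub. apply Hz2.
      eapply Rle_trans. exact Hw. apply Rmult_le_compat_r. lra. exact (powS_le L (S n) hL0 hL1).
    + intro n. exists (z n). rewrite hrefl. pose proof (pow_lt L (S n) hL0). nra.
    + intros n w Hw. exists (d (z n) w - L ^ S n * del). split. lra.
      intros v hv Hv. apply Hw. specialize (htri (z n) v w). rewrite (hsym v w) in htri. lra.
    + exists w. split.
      * pose proof (Hw 0%nat) as H. simpl in H. simpl z in H. lra.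
      * apply hzero. apply NNPP; intro hne.
        set (a := d (f w) y). assert (ha : 0 < a) by (pose proof (hpos (f w) y); unfold a in *; lra).
        destruct (hf w a ha) as [dl [hdl Hc]].
        destruct (pow_lt_1_zero L) with (y := Rmin dl a / del) as [N HN].
        { rewrite Rabs_pos_eq; lra. }
        { apply Rdiv_lt_0_compat; auto. apply Rmin_pos; auto. }
        specialize (HN N (le_n N)). rewrite Rabs_pos_eq in HN by (pose proof (pow_lt L N hL0); lra).
        assert (hN : L ^ N * del < Rmin dl a).
        { apply (Rmult_lt_compat_r del) in HN; auto. unfold Rdiv in HN.
          rewrite Rmult_assoc, Rinv_l, Rmult_1_r in HN; lra. }
        pose proof (Rmin_l dl a). pose proof (Rmin_r dl a).
        assert (h1 : d (f w) (f (z N)) < a).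
        { apply Hc. rewrite hsym. pose proof (Hw N). pose proof (powS_le L N hL0 hL1).
          assert (L ^ S N * del <= L ^ N * del) by (apply Rmult_le_compat_r; lra). lra. }
        pose proof (Hz1 N).
        pose proof (hu (f w) (f (z N)) y).
        assert (Rmax (d (f w) (f (z N))) (d (f (z N)) y) < a) by (apply Rmax_lub_lt; lra).
        unfold a in *; lra.
  - intros [del0 [hdel0 H2]].
    exists del0; split; auto.
    intros del hdel hle xs hxs.
    set (A := fun N w => forall i, (i <= N)%nat -> d (Nat.iter i f w) (xs i) <= L * del).
    assert (Hne : forall m k, exists w, forall i, (i <= m)%nat ->
      d (Nat.iter i f w) (xs (k + i)%nat) <= L * del).
    { induction m; intro k.
      - exists (xs k). intros i hi. assert (i = 0%nat) by lia. subst. simpl.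
        rewrite Nat.add_0_r, hrefl. nra.
      - destruct (IHm (S k)) as [w' Hw'].
        pose proof (Hw' 0%nat (Nat.le_0_l _)) as H0. simpl in H0. rewrite Nat.add_0_r in H0.
        destruct (H2 del hdel hle (xs k) w') as [z [Hz1 Hz2]].
        { eapply Rle_trans. apply (hu _ (xs (S k))). apply Rmax_lub. apply hxs.
          rewrite hsym. nra. }
        exists z. intros [|j] hj.
        + simpl. rewrite Nat.add_0_r, hsym. exact Hz1.
        + rewrite Nat.iter_succ_r, Hz2. replace (k + S j)%nat with (S k + j)%nat by lia.
          apply Hw'. lia. }
    destruct (nested d hc A) as [w Hw].
    + intros n w Hw i hi. apply Hw. lia.
    + intro n. destruct (Hne n 0%nat) as [w Hw]. exists w. intros i hi. apply Hw; auto.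
    + intros n w Hw. unfold A in Hw.
      assert (exists i, (i <= n)%nat /\ L * del < d (Nat.iter i f w) (xs i)) as [i [hi hgt]].
      { apply NNPP; intro Hn. apply Hw. intros i hi. apply Rnot_lt_le. intro. apply Hn. eauto. }
      destruct (iter_cont d f hf i w (d (Nat.iter i f w) (xs i) - L * del)) as [e [he He]]. lra.
      exists e; split; auto. intros v hv Hv. specialize (He v hv).
      specialize (Hv i hi). specialize (htri (Nat.iter i f w) (Nat.iter i f v) (xs i)). lra.
    + exists w. intro i. apply (Hw i i). lia.
Qed.
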